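(* Write $v(m,n)=v^{11}(m,n)$. For every $m\in\mathbb Z_{>0}$ and $\nu\in\mathbb Z_{\ge 0}$, in $M_r$ we have $$v(m,m)\,v(-m,-m)^{\nu}\mathbf 1=2m^2\nu(r+2\nu-2)\,v(-m,-m)^{\nu-1}\mathbf 1$$ (for $\nu=0$ both sides are $0$).
   Context: Fix an integer $d\ge 2$ and $r\in\mathbb{C}$. Let $\hat{\mathfrak h}$ be the complex Lie algebra with basis $\{v^i(m)\mid 1\le i\le d,\ m\in\mathbb{Z}\}\cup\{\mathbf c\}$ and bracket $[v^i(m),v^j(n)]=\delta_{m+n,0}\delta_{i,j}\,m\,\mathbf c$, $[\mathbf c,\hat{\mathfrak h}]=0$. In $A=U(\hat{\mathfrak h})/\langle \mathbf c-1\rangle$ let $v^{ij}(m,n)$ be the image of $v^i(m)v^j(n)$; then $v^{ij}(m,n)=v^{ji}(n,m)$ unless $i=j$ and $m=-n$, and $v^{ii}(m,-m)=v^{ii}(-m,m)+m$. Let $\mathcal B=\{v^{ii}(m,n)\mid 1\le i\le d,\ m\le n\}\cup\{v^{ij}(m,n)\mid 1\le i<j\le d,\ m,n\in\mathbb Z\}$; then $\mathcal B\cup\{1\}$ is linearly independent, $\mathcal L:=\mathrm{span}_{\mathbb C}\mathcal B\oplus\mathbb C\subset A$ contains every $v^{ij}(m,n)$ and is closed under $[x,y]=xy-yx$. With $\pi_1,\pi_2$ the projections of $\mathcal L$ onto $\mathrm{span}\,\mathcal B$ and onto $\mathbb C$, $[x,y]_r=\pi_1([x,y])+r\pi_2([x,y])$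 is a Lie bracket on $\mathcal L$; call this Lie algebra $\mathcal L_r$. Let $\mathcal B_+=\{v^{ij}(m,n)\in\mathcal B\mid m\ge 0\text{ or }n\ge 0\}$, $\mathcal L_r^+=\mathrm{span}\,\mathcal B_+\oplus\mathbb C$, and $M_r=U(\mathcal L_r)\otimes_{U(\mathcal L_r^+)}\mathbb C\mathbf 1$, where $\mathcal B_+$ acts by $0$ on $\mathbf 1$ and $s\in\mathbb C\subset\mathcal L_r$ acts by the scalar $s$. *)

(* Defs.v *)
From HB Require Import structures.
From mathcomp Require Import all_boot all_order all_algebra.
From mathcomp Require Import reals complex.
Set Implicit Arguments. Unset Strict Implicit. Unset Printing Implicit Defensive.
Import Order.TTheory GRing.Theory Num.Theory.
Local Open Scope ring_scope.

(* Generators of the vector space L:  Some (i,j,m,n) stands for v^{ij}(m,n)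
   (indices i,j are 0-based: 'I_d = {0,...,d-1} encodes {1,...,d}),
   None stands for the element 1 of the summand C of L. *)
Definition gen (d : nat) := option ('I_d * 'I_d * int * int).
Definition word (d : nat) := seq (gen d).

Section FreeAlg.
Variable F : fieldType.
Variable d : nat.

(* Elements of the free associative algebra F<gen d> are represented by their
   coefficient functions  word d -> F  (all elements we build have finite
   support). *)
Definition elem := word d -> F.

Definition el0 : elem := fun _ => 0.
Definition eladd (f g : elem) : elem := fun w => f w + g w.
Definition elscale (c : F) (f : elem) : elem := fun w => c * f w.
Definition single (u : word d) : elem := fun w => (w == u)%:R.
Definition lmulw (u : word d) (f : elem) : elem :=
  fun w => if take (size u) w == u then f (drop (size u) w) else 0.
Definition rmulw (v : word d) (f : elem) : elem :=
  fun w => if drop (size w - size v) w == v then f (take (size w - size v) w)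
           else 0.

(* [v^p(s), v^q(t)] = delta_{pq} delta_{s+t,0} s *)
Definition hcomm (p : 'I_d) (s : int) (q : 'I_d) (t : int) : F :=
  if (p == q) && (s + t == 0) then s%:~R else 0.

(* scalar (C-)component of v^{pq}(s,t) in the decomposition L = span B (+) C *)
Definition corr (p q : 'I_d) (s t : int) : F :=
  if (p == q) && (s + t == 0) && (0 < s) then s%:~R else 0.

(* image in L_r of the element v^{pq}(s,t) of A occurring in a commutator:
   basis part + r * scalar part, written with generators
   (v^{pq}(s,t) = basis part + corr * 1 in L). *)
Definition brterm (r : F) (p q : 'I_d) (s t : int) : elem :=
  eladd (single [:: Some (p, q, s, t)])
        (elscale ((r - 1) * corr p q s t) (single [:: None])).

Definition bracket_r (r : F) (x y : gen d) : elem :=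
  match x, y with
  | Some (i, j, a, b), Some (k, l, c, e) =>
      eladd (elscale (hcomm j b k c) (brterm r i l a e))
     (eladd (elscale (hcomm j b l e) (brterm r i k a c))
     (eladd (elscale (hcomm i a k c) (brterm r l j e b))
            (elscale (hcomm i a l e) (brterm r k j c b))))
  | _, _ => el0
  end.

(* two-sided relators: linear relations presenting L, and the Lie relations
   x y - y x - [x,y]_r defining U(L_r) *)
Inductive tworel (r : F) : elem -> Prop :=
  | rel_sym (i j : 'I_d) (a b : int) :
      ~~ ((i == j) && (a + b == 0)) ->
      tworel r (eladd (single [:: Some (i, j, a, b)])
                      (elscale (-1) (single [:: Some (j, i, b, a)])))
  | rel_diag (i : 'I_d) (a : int) :
      tworel r (eladd (single [:: Some (i, i, a, - a)])
               (eladd (elscale (-1) (single [:: Some (i, i, - a, a)]))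
                      (elscale (- a%:~R) (single [:: None]))))
  | rel_lie (x y : gen d) :
      tworel r (eladd (single [:: x; y])
               (eladd (elscale (-1) (single [:: y; x]))
                      (elscale (-1) (bracket_r r x y)))).

Definition inB (t : 'I_d * 'I_d * int * int) : bool :=
  let: (i, j, m, n) := t in ((i : nat) < j)%N || ((i == j) && (m <= n)).
Definition inBplus (t : 'I_d * 'I_d * int * int) : bool :=
  let: (i, j, m, n) := t in inB t && ((0 <= m) || (0 <= n)).

(* left relators: x - chi(x) for x in L_r^+ (B_+ acts by 0, s in C by s) *)
Inductive leftrel : elem -> Prop :=
  | lrel_plus t : inBplus t -> leftrel (single [:: Some t])
  | lrel_one : leftrel (eladd (single [:: None]) (elscale (-1) (single [::]))).

(* the kernel of  F<gen d> -> M_r = U(L_r) (x)_{U(L_r^+)} C 1 :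
   two-sided ideal generated by tworel plus left ideal generated by leftrel *)
Inductive inKer (r : F) : elem -> Prop :=
  | ker0 : inKer r el0
  | ker_lin c f g : inKer r f -> inKer r g -> inKer r (eladd (elscale c f) g)
  | ker_ext f g : inKer r f -> (forall w, f w = g w) -> inKer r g
  | ker_two u v rho : tworel r rho -> inKer r (lmulw u (rmulw v rho))
  | ker_left u k : leftrel k -> inKer r (lmulw u k).

(* equality in M_r of  (word u) . 1  and  c * (word v) . 1 *)
Definition Mr_eq (r : F) (u : word d) (c : F) (v : word d) : Prop :=
  inKer r (eladd (single u) (elscale (- c) (single v))).

End FreeAlg.

(* the index 1 (0-based: 0) of 'I_d when d >= 2 *)
Definition idx1 (d : nat) (hd : (1 < d)%N) : 'I_d := Ordinal (ltnW hd).

(* Main.v *)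
Require Import Defs.
From HB Require Import structures.
From mathcomp Require Import all_boot all_order all_algebra.
From mathcomp Require Import reals complex.
From mathcomp Require Import ring zify.
Import Order.TTheory GRing.Theory Num.Theory.
Local Open Scope ring_scope.

Set Implicit Arguments.
Section Work.
Variables (F : fieldType) (d : nat) (r : F).

Definition E (f g : elem F d) := inKer r (fun w => f w - g w).

Lemma E_congr f g f' g' : E f g -> (forall z, f' z = f z) -> (forall z, g z = g' z) -> E f' g'.
Proof. move=> H H1 H2; apply: ker_ext H _ => z; by rewrite H1 H2. Qed.

Lemma E_trans f g h : E f g -> E g h -> E f h.
Proof.
move=> H1 H2; apply: ker_ext (ker_lin 1 H1 H2) _ => z; rewrite /eladd /elscale; ring.
Qed.

Lemma E_refl f : E f f.
Proof. apply: ker_ext (@ker0 F d r) _ => z; rewrite /el0; ring. Qed.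

Lemma E_add f1 g1 f2 g2 : E f1 g1 -> E f2 g2 ->
  E (fun z => f1 z + f2 z) (fun z => g1 z + g2 z).
Proof.
move=> H1 H2; apply: ker_ext (ker_lin 1 H1 H2) _ => z; rewrite /eladd /elscale; ring.
Qed.

Lemma E_scale a f g : E f g -> E (fun z => a * f z) (fun z => a * g z).
Proof.
move=> H; apply: ker_ext (ker_lin a H (@ker0 F d r)) _ => z; rewrite /eladd /elscale /el0; ring.
Qed.

Lemma lmulw_single (u s z : word d) : lmulw u (single F s) z = single F (u ++ s) z.
Proof.
rewrite /lmulw /single; case: ifP => [/eqP Ht | Hn].
  by rewrite -{2}(cat_take_drop (size u) z) Ht eqseq_cat // eqxx.
case: eqP => // Hz; move: Hn; by rewrite Hz take_size_cat ?eqxx.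
Qed.

Lemma rmulw_single (v s z : word d) : rmulw v (single F s) z = single F (s ++ v) z.
Proof.
rewrite /rmulw /single; case: ifP => [/eqP Hd | Hn].
  have Ez : z = take (size z - size v) z ++ v.
    by rewrite -[X in X = _](cat_take_drop (size z - size v)) Hd.
  rewrite [X in (X == _ ++ _)]Ez.
  case: eqP => [->|ne]; first by rewrite eqxx.
  case: eqP => // He; exfalso; apply: ne.
  have hs : size (take (size z - size v) z) = size s.
    by move: (congr1 size He); rewrite !size_cat => /addIn.
  by move/eqP: He; rewrite eqseq_cat // => /andP [/eqP].
case: eqP => // Hz; move: Hn; rewrite Hz size_cat addnK drop_size_cat //.
by rewrite eqxx.
Qed.

Lemma lmulw_add u (f g : elem F d) z :
  lmulw u (eladd f g) z = lmulw u f z + lmulw u g z.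
Proof. rewrite /lmulw /eladd; case: ifP => _ //; by rewrite addr0. Qed.
Lemma lmulw_scale u a (f : elem F d) z :
  lmulw u (elscale a f) z = a * lmulw u f z.
Proof. rewrite /lmulw /elscale; case: ifP => _ //; by rewrite mulr0. Qed.
Lemma lmulw_ext u (f g : elem F d) z : (forall s, f s = g s) -> lmulw u f z = lmulw u g z.
Proof. move=> H; rewrite /lmulw; case: ifP => _ //. Qed.
Lemma rmulw_add u (f g : elem F d) z :
  rmulw u (eladd f g) z = rmulw u f z + rmulw u g z.
Proof. rewrite /rmulw /eladd; case: ifP => _ //; by rewrite addr0. Qed.
Lemma rmulw_scale u a (f : elem F d) z :
  rmulw u (elscale a f) z = a * rmulw u f z.
Proof. rewrite /rmulw /elscale; case: ifP => _ //; by rewrite mulr0. Qed.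

Lemma LR_add u w (f g : elem F d) z :
  lmulw u (rmulw w (eladd f g)) z = lmulw u (rmulw w f) z + lmulw u (rmulw w g) z.
Proof. rewrite (@lmulw_ext u _ (eladd (rmulw w f) (rmulw w g)) z (rmulw_add w f g)); exact: lmulw_add. Qed.
Lemma LR_scale u w a (f : elem F d) z :
  lmulw u (rmulw w (elscale a f)) z = a * lmulw u (rmulw w f) z.
Proof. rewrite (@lmulw_ext u _ (elscale a (rmulw w f)) z (rmulw_scale w a f)); exact: lmulw_scale. Qed.
Lemma LR_single (u w s z : word d) :
  lmulw u (rmulw w (single F s)) z = single F (u ++ s ++ w) z.
Proof. rewrite (@lmulw_ext u _ (single F (s ++ w)) z (rmulw_single w s)); exact: lmulw_single. Qed.
Lemma LR_0 (u w z : word d) : lmulw u (rmulw w (@el0 F d)) z = 0.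
Proof. rewrite /lmulw /rmulw /el0; by case: ifP => _ //; case: ifP. Qed.

Opaque single eladd elscale el0.

Lemma L_lie (u w : word d) (a b : gen d) :
  E (single F (u ++ a :: b :: w))
    (fun z => single F (u ++ b :: a :: w) z + lmulw u (rmulw w (bracket_r r a b)) z).
Proof.
apply: ker_ext (ker_two u w (rel_lie r a b)) _ => z.
rewrite !LR_add !LR_scale !LR_single !cat_cons !cat0s; ring.
Qed.

Lemma L_plus (u : word d) t : inBplus t -> E (single F (u ++ [:: Some t])) (fun _ => 0).
Proof.
move=> H; apply: ker_ext (ker_left r u (lrel_plus F H)) _ => z.
by rewrite lmulw_single subr0.
Qed.

Lemma L_none (w u : word d) : E (single F (u ++ None :: w)) (single F (u ++ w)).
Proof.
elim: w u => [|g w IH] u.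
  apply: ker_ext (ker_left r u (lrel_one F d)) _ => z.
  rewrite lmulw_add lmulw_scale !lmulw_single cats0; ring.
apply: E_trans (L_lie u w None g) _.
apply: E_congr (IH (rcons u g)) _ _ => z; last by rewrite cat_rcons.
by rewrite LR_0 addr0 cat_rcons.
Qed.

Variables (i : 'I_d) (m : int) (hm : 0 < m).
Let x : gen d := Some (i, i, m, m).
Let y : gen d := Some (i, i, - m, - m).
Let h : gen d := Some (i, i, - m, m).
Let k : gen d := Some (i, i, m, - m).
Let Y n := nseq n y.

Lemma hc1 : hcomm F i m i (- m) = m%:~R :> F.
Proof. by rewrite /hcomm eqxx addrN eqxx. Qed.
Lemma hc2 : hcomm F i (- m) i (- m) = 0 :> F.
Proof. rewrite /hcomm eqxx /=; have -> : (- m + - m == 0) = false by lia. by []. Qed.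
Lemma co1 : corr F i i m (- m) = m%:~R :> F.
Proof. by rewrite /corr eqxx addrN eqxx hm. Qed.
Lemma co2 : corr F i i (- m) m = 0 :> F.
Proof. rewrite /corr; have -> : (0 < - m) = false by lia. by rewrite andbF. Qed.
Lemma co3 : corr F i i (- m) (- m) = 0 :> F.
Proof. rewrite /corr; have -> : (- m + - m == 0) = false by lia. by rewrite andbF andFb. Qed.

Lemma L_diag (u w : word d) : E (single F (u ++ k :: w))
  (fun z => single F (u ++ h :: w) z + m%:~R * single F (u ++ w) z).
Proof.
have H1 : E (single F (u ++ k :: w))
  (fun z => single F (u ++ h :: w) z + m%:~R * single F (u ++ None :: w) z).
  apply: ker_ext (ker_two u w (rel_diag r i m)) _ => z.
  rewrite !LR_add !LR_scale. repeat erewrite LR_single. simpl cat.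
  Time ring.
apply: E_trans H1 _; apply: E_add; first exact: E_refl.
exact: E_scale (L_none _ _).
Qed.

Lemma LR_hy (u w : word d) z : lmulw u (rmulw w (bracket_r r h y)) z =
  2 * m%:~R * single F (u ++ y :: w) z.
Proof.
rewrite /h /y /bracket_r; cbv beta iota.
rewrite !LR_add !LR_scale /brterm !LR_add !LR_scale. repeat erewrite LR_single.
erewrite hc1, hc2, co3. simpl cat. ring.
Qed.

Lemma LR_xy (u w : word d) z : lmulw u (rmulw w (bracket_r r x y)) z =
  2 * m%:~R * single F (u ++ k :: w) z + 2 * m%:~R * single F (u ++ h :: w) z
  + 2 * m%:~R ^+ 2 * (r - 1) * single F (u ++ None :: w) z.
Proof.
rewrite /x /y /bracket_r; cbv beta iota.
rewrite !LR_add !LR_scale /brterm !LR_add !LR_scale. repeat erewrite LR_single.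
erewrite hc1, co1, co2. simpl cat. rewrite /h /k. ring.
Qed.

Lemma L_h n (u : word d) : E (single F (u ++ h :: Y n)) (fun z => (2 * m%:~R * n%:R) * single F (u ++ Y n) z).
Proof.
elim: n u => [|n IH] u.
  have Hb : inBplus (i, i, - m, m).
    rewrite /inBplus /inB eqxx /=; apply/andP; split; [apply/orP; right|]; lia.
  apply: E_congr (@L_plus u (i, i, - m, m) Hb) _ _ => // z; ring.
apply: E_trans (L_lie u (Y n) h y) _.
have := E_add (IH (rcons u y)) (E_refl (fun z => lmulw u (rmulw (Y n) (bracket_r r h y)) z)).
move=> H; apply: E_congr H _ _ => z; first by erewrite cat_rcons.
erewrite LR_hy, cat_rcons. rewrite /Y /=. ring.
Qed.

Definition cc (n : nat) : F := 2 * m%:~R ^+ 2 * n%:R * (r + 2 * n%:R - 2).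

Lemma L_x n (u : word d) : E (single F (u ++ x :: Y n)) (fun z => cc n * single F (u ++ Y n.-1) z).
Proof.
elim: n u => [|n IH] u.
  have Hb : inBplus (i, i, m, m).
    rewrite /inBplus /inB eqxx /=; apply/andP; split; [apply/orP; right|]; lia.
  apply: E_congr (@L_plus u (i, i, m, m) Hb) _ _ => // z; rewrite /cc; ring.
apply: E_trans (L_lie u (Y n) x y) _.
have E1 := IH (rcons u y).
have Ek : E (single F (u ++ k :: Y n))
   (fun z => 2 * m%:~R * n%:R * single F (u ++ Y n) z + m%:~R * single F (u ++ Y n) z).
  apply: E_trans (L_diag u (Y n)) _; apply: E_add; [exact: L_h | exact: E_refl].
have H := E_add E1 (E_add (E_scale (2 * m%:~R) Ek) (E_add (E_scale (2 * m%:~R) (L_h n u))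
            (E_scale (2 * m%:~R ^+ 2 * (r - 1)) (L_none (Y n) u)))).
apply: E_congr H _ _ => z.
  erewrite LR_xy, cat_rcons. ring.
erewrite cat_rcons.
case: n {IH E1 Ek} => [|n].
  rewrite /cc /=. ring.
rewrite /Y /cc /=. ring.
Qed.

End Work.

Theorem lemma5p3 (R : realType) (d : nat) (hd : (1 < d)%N) (r : R[i])
    (m : int) (nu : nat) (hm : 0 < m) :
  let v := fun a b : int => Some (idx1 hd, idx1 hd, a, b) : gen d in
  Mr_eq r (v m m :: nseq nu (v (- m) (- m)))
          (2 * m%:~R ^+ 2 * nu%:R * (r + 2 * nu%:R - 2))
          (nseq nu.-1 (v (- m) (- m))).
Proof.
move=> v.
have H := @L_x _ _ r (idx1 hd) m hm nu [::].
apply: ker_ext H _ => z.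
rewrite /eladd /elscale /cc /=. ring.
Qed.
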